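(* For any BT partition sort algorithm $\mathcal{A}$ that sorts the permutation $\pi$ using $\mathcal{A}(\pi)$ accesses, there is a BST mergesort algorithm $\mathcal{B}$ that sorts the permutation $\pi^{-1}$ using $\mathcal{B}(\pi^{-1})=\mathcal{A}(\pi)$ accesses; and conversely, for any BST mergesort algorithm $\mathcal{B}$ sorting $\pi^{-1}$ using $\mathcal{B}(\pi^{-1})$ accesses there is a BT partition sort algorithm $\mathcal{A}$ sorting $\pi$ with $\mathcal{A}(\pi)=\mathcal{B}(\pi^{-1})$ accesses.
   Context: A top tree of a binary tree $T$ is a connected set of nodes containing the root. BST merge: given BSTs $T_A,T_B$ with disjoint keys, for some top trees $\tau_a$ of $T_A$, $\tau_b$ of $T_B$, it returns a BST $T$ on the union of keys such that for some top tree $\tau$ of $T$, $\tau=\tau_a\cup\tau_b$, the subtrees hanging off $\tau$ are unchanged subtrees of $T_A$ or $T_B$, and $\tau$ contains the block boundaries (in the sorted merged order, blocks are maximal contiguous runs of keys from the same input; boundaries are their first and last keys). Number of accesses: $|\tau|$. BST mergesort: on input of size 1 returns it; otherwise splits the input sequence into two contiguous nonempty parts, recursively sorts each by BST mergesort, BST-merges the results; accesses are summed over all merges. BT partition: given a binary tree (BT) $T$ (its left-to-right order of keys represents input order), for some top tree $\tau$ of $T$ returns two nonempty BTs $T_A,T_B$ with distinct keys such that for some top trees $\tau_a,\tau_b$ of them $\tau=\tau_a\cup\tau_b$, the other subtrees of $T$ appear unchanged in $T_A$ or $T_B$, $\tau$ contains the block boundaries (blocks: maximal contiguous runs in the left-to-right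 order of $T$ sent to the same output), and the left-to-right orders of $T_A$, $T_B$ are subsequences of that of $T$. Number of accesses: $|\tau|$. BT partition sort: on a BT of size one stops; otherwise BT-partitions $T$ into $T_a,T_b$ with, for some key $k$, keys of $T_a$ all $<k$ and keys of $T_b$ all $\ge k$, recurses, and appends; it sorts $\pi$ when started on a BT with left-to-right order $\pi$; accesses are summed over all partitions. *)

(* Defs.v *)
From HB Require Import structures.
From mathcomp Require Import all_boot all_fingroup.
Set Implicit Arguments. Unset Strict Implicit. Unset Printing Implicit Defensive.

(* Binary trees with nat keys; a node is identified with its key
   (keys are always distinct in the trees we consider). *)
Inductive bt := Leaf | Node of bt & nat & bt.

Fixpoint eqbt (t1 t2 : bt) : bool :=
  match t1, t2 with
  | Leaf, Leaf => true
  | Node l1 k1 r1, Node l2 k2 r2 => [&& eqbt l1 l2, k1 == k2 & eqbt r1 r2]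
  | _, _ => false
  end.

Lemma eqbtP : Equality.axiom eqbt.
Proof.
elim=> [|l1 IHl k1 r1 IHr] [|l2 k2 r2] /=; try by constructor.
apply: (iffP and3P) => [[/IHl -> /eqP -> /IHr ->]|[<- <- <-]] //.
by split=> //; [apply/IHl | apply/IHr].
Qed.

HB.instance Definition _ := hasDecEq.Build bt eqbtP.

Fixpoint inorder (t : bt) : seq nat :=
  if t is Node l k r then inorder l ++ k :: inorder r else [::].

Definition bst (t : bt) : bool := sorted ltn (inorder t).

(* top_in S t : the nodes of t lying in S form either nothing or a
   connected set containing the root of t *)
Fixpoint top_in (S : seq nat) (t : bt) : bool :=
  if t is Node l k r then
    if k \in S then top_in S l && top_in S r
    else all (fun x => x \notin S) (inorder t)
  else true.

Definition top_tree (S : seq nat) (t : bt) : bool :=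
  [&& (if t is Node _ k _ then k \in S else false), top_in S t
    & all (fun x => x \in inorder t) S].

Definition tsize (S : seq nat) (t : bt) : nat := count (fun x => x \in S) (inorder t).

Fixpoint hang (S : seq nat) (t : bt) : seq bt :=
  if t is Node l k r then
    if k \in S then hang S l ++ hang S r else [:: t]
  else [::].

(* block boundaries of the sequence s, where inA says which block an element
   is sent to / comes from: first and last elements, and both elements of
   every adjacent pair with different origins *)
Fixpoint pair_bnd (inA : nat -> bool) (s : seq nat) : seq nat :=
  match s with
  | x :: ((y :: _) as t) =>
      (if inA x != inA y then [:: x; y] else [::]) ++ pair_bnd inA t
  | _ => [::]
  end.

Definition boundaries (inA : nat -> bool) (s : seq nat) : seq nat :=
  take 1 s ++ drop (size s).-1 s ++ pair_bnd inA s.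

Definition bst_merge (tA tB t : bt) (c : nat) : Prop :=
  [/\ bst tA, bst tB, bst t,
      perm_eq (inorder t) (inorder tA ++ inorder tB) &
      exists tauA tauB tau : seq nat,
        [/\ [&& top_tree tauA tA, top_tree tauB tB & top_tree tau t],
            tau =i tauA ++ tauB,
            all (fun h => h \in hang tauA tA ++ hang tauB tB) (hang tau t),
            all (fun x => x \in tau)
                (boundaries (fun x => x \in inorder tA)
                            (sort leq (inorder tA ++ inorder tB)))
          & c = tsize tau t]].

Inductive msort : seq nat -> bt -> nat -> Prop :=
  | msort1 x : msort [:: x] (Node Leaf x Leaf) 0
  | msortS s1 s2 t1 t2 t c1 c2 c :
      s1 != [::] -> s2 != [::] ->
      msort s1 t1 c1 -> msort s2 t2 c2 -> bst_merge t1 t2 t c ->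
      msort (s1 ++ s2) t (c1 + c2 + c).

Definition bt_partition (t tA tB : bt) (c : nat) : Prop :=
  [/\ [&& uniq (inorder t), tA != Leaf & tB != Leaf],
      perm_eq (inorder t) (inorder tA ++ inorder tB),
      subseq (inorder tA) (inorder t), subseq (inorder tB) (inorder t) &
      exists tau tauA tauB : seq nat,
        [/\ [&& top_tree tau t, top_tree tauA tA & top_tree tauB tB],
            tau =i tauA ++ tauB,
            all (fun h => h \in hang tauA tA ++ hang tauB tB) (hang tau t),
            all (fun x => x \in tau)
                (boundaries (fun x => x \in inorder tA) (inorder t))
          & c = tsize tau t]].

Inductive psort : bt -> nat -> Prop :=
  | psort1 x : psort (Node Leaf x Leaf) 0
  | psortS t tA tB c cA cB :
      bt_partition t tA tB c ->
      (exists k, all (fun a => a < k) (inorder tA) /\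
                 all (fun b => k <= b) (inorder tB)) ->
      psort tA cA -> psort tB cB ->
      psort t (c + cA + cB).

Definition perm_seq n (p : {perm 'I_n}) : seq nat := [seq val (p i) | i <- enum 'I_n].

(* Main.v *)
Require Import Defs.
From HB Require Import structures.
From mathcomp Require Import all_boot all_fingroup.
Set Implicit Arguments. Unset Strict Implicit. Unset Printing Implicit Defensive.

Fixpoint map_bt (f : nat -> nat) (t : bt) : bt :=
  if t is Node l k r then Node (map_bt f l) (f k) (map_bt f r) else Leaf.

Lemma inorder_nil t : (inorder t == [::]) = (t == Leaf).
Proof. by case: t => //= l k r; case: (inorder l). Qed.

Lemma sorted_sub_subseq (a b : seq nat) :
  sorted ltn a -> sorted ltn b -> {subset a <= b} -> subseq a b.
Proof.
move=> Ha Hb Hsub.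
have E : filter (mem a) b = a.
  apply: (irr_sorted_eq ltn_trans ltnn) => //; first exact: sorted_filter ltn_trans _ _ Hb.
  move=> x; rewrite mem_filter /=; case Hx: (x \in a) => //=; exact: Hsub.
by rewrite -E filter_subseq.
Qed.

Section Map.
Variable f : nat -> nat.
Hypothesis finj : injective f.

Lemma inorder_map t : inorder (map_bt f t) = map f (inorder t).
Proof. by elim: t => //= l IHl k r IHr; rewrite IHl IHr map_cat. Qed.

Lemma map_bt_inj : injective (map_bt f).
Proof.
elim=> [|l1 IHl k1 r1 IHr] [|l2 k2 r2] //= [/IHl -> /finj -> /IHr ->] //.
Qed.

Lemma map_bt_leaf t : (map_bt f t == Leaf) = (t == Leaf).
Proof. by case: t. Qed.

Lemma all_notin_map S s :
  all (fun x => x \notin map f S) (map f s) = all (fun x => x \notin S) s.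
Proof. by rewrite all_map; apply: eq_all => x /=; rewrite (mem_map finj). Qed.

Lemma top_in_map S t : top_in (map f S) (map_bt f t) = top_in S t.
Proof.
elim: t => //= l IHl k r IHr; rewrite (mem_map finj) IHl IHr.
case: (k \in S) => //.
by rewrite !inorder_map -map_cons -map_cat all_notin_map.
Qed.

Lemma top_tree_map S t : top_tree (map f S) (map_bt f t) = top_tree S t.
Proof.
rewrite /top_tree top_in_map inorder_map all_map.
congr [&& _, _ & _]; first by case: t => //= l k r; rewrite (mem_map finj).
by apply: eq_all => x /=; rewrite (mem_map finj).
Qed.

Lemma hang_map S t : hang (map f S) (map_bt f t) = map (map_bt f) (hang S t).
Proof.
elim: t => //= l IHl k r IHr; rewrite (mem_map finj).
by case: (k \in S) => //; rewrite IHl IHr map_cat.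
Qed.

Lemma tsize_map S t : Defs.tsize (map f S) (map_bt f t) = Defs.tsize S t.
Proof.
rewrite /Defs.tsize inorder_map count_map; apply: eq_count => x /=.
by rewrite (mem_map finj).
Qed.

Lemma pair_bnd_map (P Q : nat -> bool) s :
  (forall x, Q (f x) = P x) -> pair_bnd Q (map f s) = map f (pair_bnd P s).
Proof.
move=> HQ; elim: s => [|x s IH] //; case: s IH => [|y s] IH //.
rewrite [map f _]/= [pair_bnd Q _]/= [pair_bnd P _]/= map_cat -IH /= !HQ.
by case: ifP.
Qed.

Lemma boundaries_map (P Q : nat -> bool) s :
  (forall x, Q (f x) = P x) -> boundaries Q (map f s) = map f (boundaries P s).
Proof.
move=> HQ; rewrite /boundaries !map_cat map_take map_drop size_map.
by rewrite (pair_bnd_map _ HQ).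
Qed.

Lemma all_in_map (tau B : seq nat) :
  all (fun x => x \in map f tau) (map f B) = all (fun x => x \in tau) B.
Proof. by rewrite all_map; apply: eq_all => x /=; rewrite (mem_map finj). Qed.

Lemma hang_all_map tau tauA tauB t tA tB :
  all (fun h => h \in hang tauA tA ++ hang tauB tB) (hang tau t) ->
  all (fun h => h \in hang (map f tauA) (map_bt f tA) ++ hang (map f tauB) (map_bt f tB))
      (hang (map f tau) (map_bt f t)).
Proof.
move=> H; rewrite !hang_map -map_cat all_map; apply/allP => h hin /=.
by rewrite (mem_map map_bt_inj); exact: (allP H).
Qed.

Lemma eqi_map (tau tauA tauB : seq nat) :
  tau =i tauA ++ tauB -> map f tau =i map f tauA ++ map f tauB.
Proof. by move=> H; rewrite -map_cat; apply: eq_mem_map. Qed.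

Lemma sort_split (s a b : seq nat) k :
  perm_eq s (a ++ b) -> all (fun x => x < k) a -> all (fun x => k <= x) b ->
  sort leq s = sort leq a ++ sort leq b.
Proof.
move=> Hp Ha Hb; apply: (sorted_eq leq_trans anti_leq).
- exact: sort_sorted leq_total _.
- rewrite (sorted_pairwise leq_trans) pairwise_cat.
  rewrite -!(sorted_pairwise leq_trans) !(sort_sorted leq_total) !andbT. apply/allrelP => x y; rewrite !mem_sort => xa yb.
  by apply: ltnW; apply: (leq_trans (allP Ha x xa)); exact: (allP Hb y yb).
- rewrite perm_sort; apply: (perm_trans Hp); apply: perm_cat; by rewrite perm_sym perm_sort.
Qed.

Lemma psort_msort t c : psort t c -> sorted ltn (map f (inorder t)) ->
  msort (map f (sort leq (inorder t))) (map_bt f t) c.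
Proof.
elim=> [x|{}t tA tB {}c cA cB [/and3P[Hu HA HB] Hp HsA HsB
   [tau [tauA [tauB [Htop Heq Hh Hb ->]]]]] [k [HkA HkB]] _ IHA _ IHB] Hs.
  have -> : sort leq [:: x] = [:: x] by apply: (sorted_sort leq_trans).
  exact: msort1.
have sA : sorted ltn (map f (inorder tA)) by apply: (subseq_sorted ltn_trans _ Hs); exact: map_subseq.
have sB : sorted ltn (map f (inorder tB)) by apply: (subseq_sorted ltn_trans _ Hs); exact: map_subseq.
rewrite -addnA addnC (sort_split Hp HkA HkB) map_cat;
  apply: (msortS (t1 := map_bt f tA) (t2 := map_bt f tB)); last first.
- split; rewrite /bst ?inorder_map //; first by rewrite -map_cat perm_map.
  exists (map f tauA), (map f tauB), (map f tau); split.
  + by rewrite !top_tree_map; case/and3P: Htop => -> -> ->.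
  + exact: eqi_map.
  + exact: hang_all_map.
  + have -> : sort leq (map f (inorder tA) ++ map f (inorder tB)) = map f (inorder t).
      rewrite -map_cat; apply: (sorted_eq leq_trans anti_leq).
      * exact: sort_sorted leq_total _.
      * by move: Hs; rewrite ltn_sorted_uniq_leq => /andP[].
      * by rewrite perm_sort perm_map // perm_sym.
    rewrite (boundaries_map (P := fun x => x \in inorder tA)) ?all_in_map //.
    by move=> x; rewrite (mem_map finj).
  + by rewrite tsize_map.
- exact: IHB.
- exact: IHA.
- by rewrite -size_eq0 size_map size_sort size_eq0 inorder_nil.
- by rewrite -size_eq0 size_map size_sort size_eq0 inorder_nil.
Qed.

Lemma msort_inv s t c : msort s t c -> bst t /\ perm_eq (inorder t) s.
Proof.
elim=> [x|s1 s2 t1 t2 {}t c1 c2 {}c _ _ _ [_ P1] _ [_ P2] [_ _ Hbt Hp _]] //.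
split=> //; apply: (perm_trans Hp); exact: perm_cat.
Qed.

Lemma msort_psort s t c : msort s t c -> sorted ltn (map f s) ->
  psort (map_bt f t) c.
Proof.
elim=> [x|s1 s2 t1 t2 {}t c1 c2 {}c Hs1 Hs2 M1 IH1 M2 IH2
   [HbA HbB Hbt Hp [tauA [tauB [tau [Htop Heq Hh Hb ->]]]]]] Hs.
  by apply: psort1.
have [_ P1] := msort_inv M1; have [_ P2] := msort_inv M2.
move: (Hs); rewrite map_cat sorted_pairwise ?pairwise_cat; last exact: ltn_trans.
rewrite -!sorted_pairwise; try exact: ltn_trans.
case/and3P=> Hrel Hs1' Hs2'.
rewrite addnC addnA.
have ne1 : t1 != Leaf by rewrite -inorder_nil -size_eq0 (perm_size P1) size_eq0.
have ne2 : t2 != Leaf by rewrite -inorder_nil -size_eq0 (perm_size P2) size_eq0.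
have Hsub : forall u, subseq (inorder u) (inorder t) -> subseq (inorder (map_bt f u)) (inorder (map_bt f t)).
  by move=> u H; rewrite !inorder_map; apply: map_subseq.
apply: (psortS (tA := map_bt f t1) (tB := map_bt f t2)); last 2 first.
- exact: IH1.
- exact: IH2.
- split.
  + rewrite !map_bt_leaf ne1 ne2 inorder_map (map_inj_uniq finj).
    by rewrite (sorted_uniq ltn_trans ltnn Hbt).
  + by rewrite !inorder_map -map_cat perm_map.
  + apply: Hsub; apply: sorted_sub_subseq => // x xin.
    by rewrite (perm_mem Hp) mem_cat xin.
  + apply: Hsub; apply: sorted_sub_subseq => // x xin.
    by rewrite (perm_mem Hp) mem_cat xin orbT.
  + exists (map f tau), (map f tauA), (map f tauB); split.
    * by rewrite !top_tree_map; case/and3P: Htop => -> -> ->.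
    * exact: eqi_map.
    * exact: hang_all_map.
    * have E : sort leq (inorder t1 ++ inorder t2) = inorder t.
        apply: (sorted_eq leq_trans anti_leq).
        -- exact: sort_sorted leq_total _.
        -- by move: Hbt; rewrite /bst ltn_sorted_uniq_leq => /andP[].
        -- by rewrite perm_sort perm_sym.
      rewrite !inorder_map (boundaries_map (P := fun x => x \in inorder t1)) ?all_in_map -?E //.
      by move=> x; rewrite (mem_map finj).
    * by rewrite tsize_map.
- case: s2 Hs2 M2 IH2 Hs P2 Hrel Hs2' => [//|y s2'] _ _ _ _ P2 Hrel Hs2'.
  exists (f y); split.
  + apply/allP => x; rewrite inorder_map (perm_mem (perm_map f P1)) => xin.
    by move/allrelP: Hrel; apply => //; exact: mem_head.
  + apply/allP => x; rewrite inorder_map (perm_mem (perm_map f P2)) /= in_cons.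
    case/orP=> [/eqP -> //|xin].
    move: Hs2' => /= /(order_path_min ltn_trans) /allP /(_ x xin).
    exact: ltnW.
Qed.

End Map.

Definition ext n (p : {perm 'I_n}) (v : nat) : nat :=
  odflt v (omap (fun i : 'I_n => val (p i)) (insub v)).

Lemma ext_val n (p : {perm 'I_n}) (i : 'I_n) : ext p (val i) = val (p i).
Proof. by rewrite /ext valK. Qed.

Lemma ext_inj n (p : {perm 'I_n}) : injective (ext p).
Proof.
move=> x y; rewrite /ext.
case: insubP => [i _ <-|Hx]; case: insubP => [j _ <-|Hy] /=.
- by move/val_inj/perm_inj => ->.
- by move=> E; move: Hy; rewrite -E ltn_ord.
- by move=> E; move: Hx; rewrite E ltn_ord.
- done.
Qed.

Lemma perm_seq_perm n (p : {perm 'I_n}) : perm_eq (perm_seq p) (iota 0 n).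
Proof.
rewrite -val_enum_ord /perm_seq (map_comp val p); apply: perm_map.
apply: uniq_perm; first by rewrite (map_inj_uniq (@perm_inj _ p)) enum_uniq.
  exact: enum_uniq.
by move=> x; rewrite mem_enum -[x](permKV p) map_f ?mem_enum.
Qed.

Lemma map_ext_perm_seq n (p q : {perm 'I_n}) :
  map (ext q) (perm_seq p) = map (fun i : 'I_n => val (q (p i))) (enum 'I_n).
Proof. by rewrite /perm_seq -map_comp; apply: eq_map => i /=; rewrite ext_val. Qed.

Lemma map_ext_iota n (p : {perm 'I_n}) : map (ext p) (iota 0 n) = perm_seq p.
Proof. by rewrite -val_enum_ord -map_comp; apply: eq_map => i /=; rewrite ext_val. Qed.

Theorem lemma2 (n : nat) (pi : {perm 'I_n}) (c : nat) :
  (exists t, inorder t = perm_seq pi /\ psort t c) <->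
  (exists t, msort (perm_seq (pi^-1)%g) t c).
Proof.
split.
- case=> t [Ht Hps]; exists (map_bt (ext pi^-1) t).
  have E1 : map (ext pi^-1) (perm_seq pi) = iota 0 n.
    rewrite map_ext_perm_seq -val_enum_ord; apply: eq_map => i /=; by rewrite permK.
  have E2 : sort leq (perm_seq pi) = iota 0 n.
    rewrite (perm_sortP leq_total leq_trans anti_leq _ _ (perm_seq_perm pi)).
    by apply: (sorted_sort leq_trans); exact: iota_sorted.
  have := psort_msort (@ext_inj _ pi^-1) Hps.
  by rewrite Ht E1 E2 map_ext_iota; apply; exact: iota_ltn_sorted.
- case=> t Hm; have [Hb Hp] := msort_inv Hm.
  have E1 : map (ext pi) (perm_seq pi^-1) = iota 0 n.
    rewrite map_ext_perm_seq -val_enum_ord; apply: eq_map => i /=; by rewrite permKV.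
  have Ht : inorder t = iota 0 n.
    apply: (irr_sorted_eq ltn_trans ltnn) => //; first exact: iota_ltn_sorted.
    exact: perm_mem (perm_trans Hp (perm_seq_perm _)).
  exists (map_bt (ext pi) t); split; first by rewrite inorder_map Ht map_ext_iota.
  apply: (msort_psort (@ext_inj _ pi) Hm); rewrite E1; exact: iota_ltn_sorted.
Qed.
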